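(* If a finite graph $G$ has a loop, then $H^i(G)=0$ for all $i$.
   Context: Graphs are finite; loops and multiple edges allowed. For $G=(V,E)$ and $s\subseteq E$, $[G:s]$ is the spanning subgraph with edge set $s$. With $1*1=1$, $1*x=x*1=x$, $x*x=0$: an enhanced state is $S=(s,c)$, $s\subseteq E$, $c$ assigning $1$ or $x$ to each component of $[G:s]$; $i(S)=|s|$, $j(S)=$ number of components colored $x$. $C^{i,j}(G)$ is free abelian on enhanced states with $i(S)=i,j(S)=j$; $C^i(G)=\bigoplus_jC^{i,j}(G)$. For an ordering of the edges, $d(S)=\sum_{e\in E\setminus s}(-1)^{n(e)}S_e$, $n(e)$ the number of edges of $s$ ordered before $e$; $S_e=(s\cup\{e\},c_e)$ where, if $e$ joins a component to itself, colors are unchanged, and if $e$ joins distinct components $E_1,E_2$ the merged component gets $c(E_1)*c(E_2)$ (and $S_e=0$ if this product is $0$). $H^i(G)$ is the $i$-th cohomology of $(C^\bullet(G),d)$. *)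

(* Defs.v *)
(* Chromatic graph cohomology (Helme-Guizon--Rong) over Z. *)
From HB Require Import structures.
From mathcomp Require Import all_boot all_order all_algebra.
Set Implicit Arguments. Unset Strict Implicit. Unset Printing Implicit Defensive.
Import GRing.Theory.

Section Chromatic.
(* A finite graph (loops and multiple edges allowed): vertex set V (a finType),
   edge set 'I_m, each edge e having endpoints src e and tgt e.
   The edge ordering used in the differential is the natural order on 'I_m. *)
Variables (V : finType) (m : nat) (src tgt : 'I_m -> V).

Definition sadj (s : {set 'I_m}) : rel V := fun u v =>
  [exists e in s, ((src e == u) && (tgt e == v)) || ((src e == v) && (tgt e == u))].

(* an enhanced state: edge subset s plus a colouring c of the components of
   [G:s], represented as a vertex colouring constant on components
   (true = x, false = 1) *)
Definition compat (p : {set 'I_m} * {ffun V -> bool}) : bool :=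
  [forall u, forall v, connect (sadj p.1) u v ==> (p.2 u == p.2 v)].

Definition state := {p : {set 'I_m} * {ffun V -> bool} | compat p}.

Definition edge_sign (s : {set 'I_m}) (e : 'I_m) : int :=
  ((-1) ^+ #|[set e' in s | (e' < e)%N]|)%R.

(* S_e (None encodes S_e = 0) *)
Definition raw_succ (p : {set 'I_m} * {ffun V -> bool}) (e : 'I_m)
    : option ({set 'I_m} * {ffun V -> bool}) :=
  let s := p.1 in let c := p.2 in
  if connect (sadj s) (src e) (tgt e) then Some (e |: s, c)
  else if c (src e) && c (tgt e) then None
  else Some (e |: s, [ffun v => if connect (sadj s) (src e) v || connect (sadj s) (tgt e) v
                               then c (src e) || c (tgt e) else c v]).

Definition chain := {ffun state -> int}.

Definition cdiff (f : chain) : chain :=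
  [ffun T : state => (\sum_(S : state) \sum_(e : 'I_m | e \notin (val S).1)
      (if raw_succ (val S) e == Some (val T) then edge_sign (val S).1 e * f S else 0))%R].

Definition in_degree (i : nat) (f : chain) : Prop :=
  forall S : state, f S != 0%R -> #|(val S).1| = i.

(* H^i(G) = 0: every cocycle in C^i is the coboundary of a chain in C^{i-1}
   (with C^{-1} = 0) *)
Definition cohom_vanishes (i : nat) : Prop :=
  forall f : chain, in_degree i f -> cdiff f = 0%R ->
    exists g : chain, (forall S : state, g S != 0%R -> (#|(val S).1|).+1 = i) /\ cdiff g = f.

Definition has_loop : Prop := exists e : 'I_m, src e = tgt e.
End Chromatic.

(* Main.v *)
Require Import Defs.
From mathcomp Require Import all_boot all_order all_algebra.
From Stdlib Require Import FunctionalExtensionality.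
Set Implicit Arguments. Unset Strict Implicit. Unset Printing Implicit Defensive.
Import GRing.Theory.
Local Open Scope ring_scope.

Section Proof.
Variables (V : finType) (m : nat) (src tgt : 'I_m -> V) (e0 : 'I_m).
Hypothesis loop : src e0 = tgt e0.

Lemma connect_loop (s : {set 'I_m}) :
  connect (sadj src tgt s) = connect (sadj src tgt (s :\ e0)).
Proof.
apply: functional_extensionality => x; apply: functional_extensionality => y.
apply/idP/idP.
- apply: connect_sub => u v /existsP [e /andP [es H]].
  move: es H; case: (eqVneq e e0) => [-> | ne] es H.
    by move: H; rewrite -loop => /orP [] /andP [/eqP <- /eqP <-]; apply: connect0.
  apply: connect1; apply/existsP; exists e; by rewrite !inE ne es.
- apply: connect_sub => u v /existsP [e /andP [es H]].
  apply: connect1; apply/existsP; exists e; move: es; rewrite !inE => /andP [_ ->] //.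
Qed.

Lemma connect_U1 (s : {set 'I_m}) :
  connect (sadj src tgt (e0 |: s)) = connect (sadj src tgt s).
Proof.
by rewrite connect_loop [in RHS]connect_loop setDUl setDv set0U.
Qed.

Lemma compat_D1 (p : {set 'I_m} * {ffun V -> bool}) :
  compat src tgt p -> compat src tgt (p.1 :\ e0, p.2).
Proof. by rewrite /compat /= -connect_loop. Qed.

Lemma compat_U1 (p : {set 'I_m} * {ffun V -> bool}) :
  compat src tgt p -> compat src tgt (e0 |: p.1, p.2).
Proof. by rewrite /compat /= connect_U1. Qed.

Lemma rs_set p e q : raw_succ src tgt p e = Some q -> q.1 = e |: p.1.
Proof. by rewrite /raw_succ; case: ifP => _; [|case: ifP => _] => // -[<-]. Qed.

Lemma rs_loop p : raw_succ src tgt p e0 = Some (e0 |: p.1, p.2).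
Proof. by rewrite /raw_succ loop connect0. Qed.

Lemma rs_D1 s c e : raw_succ src tgt (s, c) e =
  omap (fun q => (e |: s, q.2)) (raw_succ src tgt (s :\ e0, c) e).
Proof. by rewrite /raw_succ /= -connect_loop; case: ifP => _ //; case: ifP. Qed.

Lemma sign_U1 (a : 'I_m) (s : {set 'I_m}) (b : 'I_m) : edge_sign (a |: s) b =
  if (a < b)%N && (a \notin s) then - edge_sign s b else edge_sign s b.
Proof.
rewrite /edge_sign.
have -> : [set e' in a |: s | (e' < b)%N] =
  (if (a < b)%N then a |: [set e' in s | (e' < b)%N] else [set e' in s | (e' < b)%N]).
  apply/setP => x; case: ifP => ab; rewrite !inE;
  case: (eqVneq x a) => [->|]; rewrite ?ab ?andbF //=.
case: ifP => ab /=; last by [].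
rewrite cardsU1 inE ab andbT; case: (a \in s) => //=.
by rewrite exprS mulN1r.
Qed.

Lemma sign_sq (s : {set 'I_m}) (b : 'I_m) : edge_sign s b * edge_sign s b = 1.
Proof. by rewrite /edge_sign -expr2 sqrr_sign. Qed.

Notation st := (state src tgt).
Definition phi (S : st) : st := exist _ (e0 |: (val S).1, (val S).2) (compat_U1 (valP S)).
Definition psi (S : st) : st := exist _ ((val S).1 :\ e0, (val S).2) (compat_D1 (valP S)).

Lemma phi_psi (S : st) : e0 \in (val S).1 -> phi (psi S) = S.
Proof.
move=> h; apply: val_inj; case: S h => [[s c] p] /= h.
by rewrite setD1K.
Qed.

Lemma state_eq (S T : st) : (S == T) = ((val S).1 == (val T).1) && ((val S).2 == (val T).2).
Proof. by case: S => [[s c] ?]; case: T => [[t d] ?]. Qed.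


Lemma psi_phi (U : st) : e0 \notin (val U).1 -> psi (phi U) = U.
Proof.
move=> h; apply: val_inj; case: U h => [[s c] p] /= h.
by rewrite setU1K.
Qed.

Lemma U1_inj (a : 'I_m) (X Y : {set 'I_m}) :
  a \notin X -> a \notin Y -> (a |: X == a |: Y) = (X == Y).
Proof.
move=> hx hy; apply/eqP/eqP => [h|->] //.
by rewrite -(setU1K hx) h setU1K.
Qed.

Definition D (S T : st) : int := \sum_(e | e \notin (val S).1)
  (if raw_succ src tgt (val S) e == Some (val T) then edge_sign (val S).1 e else 0).

Definition Hm (S U : st) : int :=
  if (e0 \notin (val U).1) && (S == phi U) then edge_sign (val U).1 e0 else 0.

Lemma cdiffE (f : chain src tgt) T : cdiff f T = \sum_S D S T * f S.
Proof.
rewrite ffunE; apply: eq_bigr => S _; rewrite /D big_distrl /=; apply: eq_bigr => e _.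
by case: ifP => _; rewrite ?mul0r.
Qed.

Lemma A_eq S T : \sum_U Hm S U * D U T =
  if e0 \in (val S).1 then edge_sign ((val S).1 :\ e0) e0 * D (psi S) T else 0.
Proof.
case: ifP => h.
  rewrite (bigD1 (psi S)) //= big1 ?addr0.
    by rewrite /Hm /= setD11 phi_psi // eqxx.
  move=> U ne; rewrite /Hm; case: andP => [[hU /eqP eS]|]; last by rewrite mul0r.
  by move: ne; rewrite eS psi_phi // eqxx.
apply: big1 => U _; rewrite /Hm; case: andP => [[hU /eqP eS]|]; last by rewrite mul0r.
by move: h; rewrite eS /= setU11.
Qed.

Lemma B_eq S T : \sum_U D S U * Hm U T =
  if e0 \notin (val T).1 then D S (phi T) * edge_sign (val T).1 e0 else 0.
Proof.
case: ifP => h.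
  rewrite (bigD1 (phi T)) //= big1 ?addr0.
    by rewrite /Hm h eqxx.
  by move=> U ne; rewrite /Hm (negbTE ne) andbF mulr0.
by apply: big1 => U _; rewrite /Hm h mulr0.
Qed.


Lemma D_psi_in (S T : st) : e0 \in (val S).1 -> e0 \in (val T).1 ->
  D (psi S) T = if S == T then edge_sign ((val S).1 :\ e0) e0 else 0.
Proof.
move=> hS hT; rewrite /D (bigD1 e0) /=; last by rewrite setD11.
rewrite big1 ?addr0; last first.
  move=> e /andP [_ ne]; case: eqP => // /rs_set /= h.
  by move: hT; rewrite h !inE eq_sym (negbTE ne) eqxx.
rewrite rs_loop /= setD1K //.
Qed.

Lemma D_phi_out (S T : st) : e0 \notin (val S).1 -> e0 \notin (val T).1 ->
  D S (phi T) = if S == T then edge_sign (val S).1 e0 else 0.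
Proof.
move=> hS hT; rewrite /D (bigD1 e0) //=.
rewrite big1 ?addr0; last first.
  move=> e /andP [_ ne]; case: eqP => // /rs_set /= h.
  by move: h => /setP /(_ e0); rewrite !inE eqxx eq_sym (negbTE ne) (negbTE hS).
rewrite rs_loop /=.
case: S hS => [[s c] ps]; case: T hT => [[t d] pt] /= hS hT.
rewrite state_eq /=.
have -> : (Some (e0 |: s, c) == Some (e0 |: t, d)) = (e0 |: s == e0 |: t) && (c == d) by [].
by rewrite U1_inj.
Qed.

Lemma sign_cancel (s : {set 'I_m}) e : e0 \notin s -> e \notin s -> e != e0 ->
  edge_sign s e0 * edge_sign s e + edge_sign (e0 |: s) e * edge_sign (e |: s) e0 = 0.
Proof.
move=> h0 he ne; rewrite !sign_U1 h0 he !andbT.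
case: (ltngtP e0 e) => [lt|lt|eq].
- by rewrite mulNr mulrC subrr.
- by rewrite mulrN mulrC subrr.
- by move: ne; rewrite (val_inj eq) eqxx.
Qed.

Lemma mixed (S T : st) : e0 \in (val S).1 -> e0 \notin (val T).1 ->
  edge_sign ((val S).1 :\ e0) e0 * D (psi S) T + D S (phi T) * edge_sign (val T).1 e0 = 0.
Proof.
case: S => [[s c] ps]; case: T => [[t d] pt] /= hS hT.
rewrite /D /= (bigD1 e0) /=; last by rewrite setD11.
rewrite rs_loop /= setD1K //.
have -> : (Some (s, c) == Some (t, d)) = false.
  by apply/eqP => -[est _]; move: hT; rewrite -est hS.
rewrite add0r.
rewrite (eq_bigl (fun e => e \notin s)); last first.
  move=> e /=; rewrite !inE negb_and negbK; case: (eqVneq e e0) => [->|ne] /=.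
    by rewrite hS.
  by rewrite andbT.
rewrite big_distrr big_distrl /= -big_split /=.
apply: big1 => e es.
have ne : e != e0 by apply: contraNneq es => ->.
rewrite [raw_succ _ _ (s, c) e]rs_D1.
case E: (raw_succ src tgt (s :\ e0, c) e) => [[q1 q2]|] /=; last by rewrite mulr0 mul0r addr0.
have q1E := rs_set E; rewrite /= in q1E; subst q1.
have -> : (Some (e |: (s :\ e0), q2) == Some (t, d)) = (e |: (s :\ e0) == t) && (q2 == d) by [].
have -> : (Some (e |: s, q2) == Some (e0 |: t, d)) = (e |: s == e0 |: t) && (q2 == d) by [].
have h0 : e0 \notin s :\ e0 by rewrite setD11.
have he : e \notin s :\ e0 by rewrite !inE negb_and es orbT.
have -> : (e |: s == e0 |: t) = (e |: (s :\ e0) == t).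
  rewrite -{1}(setD1K hS) setUCA U1_inj //.
  by rewrite !inE eqxx andFb orbF eq_sym.
case: eqP => [<-|] /=; last by rewrite mulr0 mul0r addr0.
case: eqP => _ /=; last by rewrite mulr0 mul0r addr0.
have -> : edge_sign s e = edge_sign (e0 |: (s :\ e0)) e by rewrite setD1K.
exact: sign_cancel.
Qed.


Lemma key (S T : st) :
  \sum_U Hm S U * D U T + \sum_U D S U * Hm U T = (S == T)%:R.
Proof.
rewrite A_eq B_eq.
case: (boolP (e0 \in (val S).1)) => hS; case: (boolP (e0 \in (val T).1)) => hT /=.
- rewrite addr0 D_psi_in //; case: ifP => _; last by rewrite mulr0.
  by rewrite sign_sq.
- have ST : (S == T) = false.
    by apply: contraNF hT => /eqP <-.
  by rewrite ST mixed.
- have ST : (S == T) = false.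
    by apply: contraNF hS => /eqP ->.
  by rewrite ST add0r.
- rewrite add0r D_phi_out //; case: (eqVneq S T) => [->|]; last by rewrite mul0r.
  by rewrite sign_sq.
Qed.

Lemma loop_vanish i : cohom_vanishes src tgt i.
Proof.
move=> f deg cyc.
pose g : chain src tgt := [ffun T => \sum_S Hm S T * f S].
exists g; split.
  move=> T; rewrite ffunE.
  case: (pickP (fun S => Hm S T * f S != 0)) => [S hS _ | none]; last first.
    by rewrite big1 ?eqxx // => S _; move: (none S) => /= /negbFE /eqP.
  move: hS; rewrite /Hm; case: andP => [[hT /eqP eS] hf|]; last by rewrite mul0r eqxx.
  have fS : f S != 0 by apply: contraNneq hf => ->; rewrite mulr0.
  by rewrite -(deg S fS) eS /= cardsU1 hT.
apply/ffunP => T.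
have H0 : \sum_U Hm U T * cdiff f U = 0 by rewrite cyc big1 // => U _; rewrite ffunE mulr0.
rewrite cdiffE.
rewrite -[LHS]addr0 -[X in _ + X = _]H0.
under eq_bigr do rewrite ffunE big_distrr.
under [X in _ + X]eq_bigr do rewrite cdiffE big_distrr.
rewrite [X in X + _]exchange_big [X in _ + X]exchange_big -big_split /=.
have -> : f T = \sum_S (S == T)%:R * f S.
  rewrite (bigD1 T) //= big1 ?addr0 ?eqxx ?mul1r // => S /negbTE ->.
  by rewrite mul0r.
apply: eq_bigr => S _.
rewrite -key mulrDl !big_distrl /=; congr (_ + _); apply: eq_bigr => U _.
  by rewrite mulrA [D U T * _]mulrC.
by rewrite mulrA [Hm U T * _]mulrC.
Qed.
End Proof.

Unset Implicit Arguments.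
Theorem mainTheorem6 (V : finType) (m : nat) (src tgt : 'I_m -> V) :
  has_loop src tgt -> forall i : nat, cohom_vanishes src tgt i.
Proof. by move=> [e0 h] i; apply: (loop_vanish h). Qed.
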